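(* Let $A\in\mathbb{R}^{n\times n}$, $B\in\mathbb{R}^n$ with $(A,B)$ controllable, $\mathcal{C}=(B\;AB\;\cdots\;A^{n-1}B)$, and suppose $e_n^T\mathcal{C}^{-1}=C_{n-1}C_{n-2}\cdots C_1$ with $C_k\in\mathbb{R}^{(n-k)\times(n-k+1)}$ for $k=1,\dots,n-1$. Let $\Phi(s)=s^n+p_1s^{n-1}+\dots+p_{n-1}s+p_n$ be a real polynomial. Put $A_1=A$ and $A_k=C_{k-1}C_{k-2}\cdots C_1A^k$ for $k=2,\dots,n$. Define $$K_0=p_nI_n,\qquad K_k=C_k\,(A_k\,p_{n-k}+K_{k-1})\quad(k=1,\dots,n-1),\qquad K=A_n+K_{n-1}.$$ Then $K=e_n^T\mathcal{C}^{-1}\Phi(A)$ and $\det(sI-A+BK)=\Phi(s)$.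
   Context: $e_n$ is the $n$-th canonical basis vector; $K_k$ is an $(n-k)\times n$ matrix and $K$ a row vector. *)

(* Defs.v *)
From HB Require Import structures.
From mathcomp Require Import all_boot all_order all_algebra.
Set Implicit Arguments. Unset Strict Implicit. Unset Printing Implicit Defensive.
Import Order.TTheory GRing.Theory Num.Theory.
Local Open Scope ring_scope.

Section Defs.
Variable R : realFieldType.

Definition ctrb (n : nat) (A : 'M[R]_n) (B : 'cV[R]_n) : 'M[R]_n :=
  \matrix_(i < n, j < n) (A ^+ j *m B) i 0.

Definition Phi (n : nat) (p : nat -> R) : {poly R} :=
  'X^n + \sum_(1 <= i < n.+1) (p i)%:P * 'X^(n - i)%N.

(* C k : the matrix C_k of size (n-k) x (n-k+1), for 1 <= k <= n-1 *)
Fixpoint prodC (n : nat) (C : forall k : nat, 'M[R]_(n - k, n - k.-1)) (k : nat)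
  : 'M[R]_(n - k, n) :=
  match k with
  | 0 => castmx (esym (subn0 n), erefl n) (1%:M : 'M[R]_n)
  | k'.+1 => C k'.+1 *m prodC C k'
  end.

Definition Amat (n : nat) (A : 'M[R]_n) (C : forall k : nat, 'M[R]_(n - k, n - k.-1))
  (k : nat) : 'M[R]_(n - k.-1, n) := prodC C k.-1 *m A ^+ k.

Fixpoint Kmat (n : nat) (A : 'M[R]_n) (C : forall k : nat, 'M[R]_(n - k, n - k.-1))
  (p : nat -> R) (k : nat) : 'M[R]_(n - k, n) :=
  match k with
  | 0 => castmx (esym (subn0 n), erefl n) ((p n)%:M : 'M[R]_n)
  | k'.+1 => C k'.+1 *m (p (n - k'.+1)%N *: Amat A C k'.+1 + Kmat A C p k')
  end.

Definition Kfinal (m : nat) (A : 'M[R]_m.+1)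
  (C : forall k : nat, 'M[R]_(m.+1 - k, m.+1 - k.-1)) (p : nat -> R) : 'rV[R]_m.+1 :=
  castmx (subSnn m, erefl m.+1) (Amat A C m.+1 + Kmat A C p m).

End Defs.

(* Main.v *)
Require Import Defs.
From HB Require Import structures.
From mathcomp Require Import all_boot all_order all_algebra.
From mathcomp Require Import zify.
Import Order.TTheory GRing.Theory Num.Theory.
Local Open Scope ring_scope.

Lemma castmx_mull (R : realFieldType) m1 m2 n p (e : m1 = m2)
  (A : 'M[R]_(m1,n)) (B : 'M[R]_(n,p)) :
  castmx (e, erefl n) A *m B = castmx (e, erefl p) (A *m B).
Proof. by case: m2 / e; rewrite !castmx_id. Qed.

Lemma Kmat_eq (R : realFieldType) n (A : 'M[R]_n)
  (C : forall k : nat, 'M[R]_(n - k, n - k.-1)) (p : nat -> R) k :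
  Kmat A C p k = prodC C k *m \sum_(j < k.+1) p (n - j)%N *: A ^+ j.
Proof.
elim: k => [|k IH].
  rewrite /= castmx_mull big_ord1 expr0 mul1mx.
  have -> : p (n - 0)%N = p n by rewrite subn0.
  by rewrite scalemx1.
rewrite /= IH /Amat /= scalemxAr -mulmxDr mulmxA [in RHS]big_ord_recr /= addrC.
by [].
Qed.

Lemma hsum (R : realFieldType) n (X : 'M[R]_n.+1) (q : {poly R}) N :
  (size q <= N)%N -> horner_mx X q = \sum_(i < N) q`_i *: X ^+ i.
Proof.
move=> hq.
have {1}-> : q = \poly_(i < N) q`_i.
  apply/polyP => j; rewrite coef_poly; case: ltnP => // hj.
  by move/leq_sizeP: hq; apply; exact: hj.
rewrite poly_def rmorph_sum; apply: eq_bigr => i _.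
by rewrite -[LHS]/(horner_mx X _) horner_mxZ /= rmorphXn /= horner_mx_X.
Qed.

Lemma hPhi (R : realFieldType) n (A : 'M[R]_n.+1) (p : nat -> R) :
  horner_mx A (Phi n.+1 p) = A ^+ n.+1 + \sum_(j < n.+1) p (n.+1 - j)%N *: A ^+ j.
Proof.
rewrite /Phi rmorphD rmorphXn /= horner_mx_X rmorph_sum; congr (_ + _).
rewrite big_add1 /= big_nat_rev /= big_mkord add0n.
apply: eq_bigr => i _; have hi := ltn_ord i.
rewrite rmorphM /= horner_mx_C rmorphXn /= horner_mx_X -mul_scalar_mx.
have e1 : (n.+1 - i.+1).+1 = (n.+1 - i)%N by rewrite subnSK.
have e2 : (n.+1 - (n.+1 - i))%N = i by rewrite subKn // ltnW.
by rewrite e1 e2.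
Qed.

Lemma s_lemma (R : realFieldType) m (A : 'M[R]_m.+1) (B : 'cV[R]_m.+1) :
  ctrb A B \in unitmx -> forall j, (j < m.+1)%N ->
  (row ord_max (invmx (ctrb A B)) *m (A ^+ j *m B)) 0 0 = (j == m)%:R.
Proof.
move=> hu j hj.
have h : row ord_max (invmx (ctrb A B)) *m ctrb A B = row ord_max 1%:M
  by rewrite -row_mul mulVmx.
have := congr1 (fun M : 'M[R]_(1,m.+1) => M 0 (Ordinal hj)) h.
rewrite !mxE /= eq_sym -(inj_eq val_inj) /= => <-; apply: eq_bigr => k _.
by congr (_ * _); rewrite /ctrb [RHS]mxE.
Qed.

Lemma term_eq (R : realFieldType) m (A : 'M[R]_m.+1) (B : 'cV[R]_m.+1)
  (w : 'rV[R]_m.+1) (c : R) i k :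
  ((c *: (w *m A ^+ i)) *m (A ^+ k *m B)) 0 0 = c * (w *m (A ^+ (i + k) *m B)) 0 0.
Proof. by rewrite -scalemxAl mxE exprD !mulmxA. Qed.


Lemma F1 (R : realFieldType) m (A : 'M[R]_m.+1) (B : 'cV[R]_m.+1) (K : 'rV[R]_m.+1) :
  ctrb A B \in unitmx -> forall j, (j <= m)%N ->
  row ord_max (invmx (ctrb A B)) *m (A - B *m K) ^+ j =
  row ord_max (invmx (ctrb A B)) *m A ^+ j.
Proof.
move=> hu; elim=> [|j IH] hj; first by rewrite !expr0.
have e1 : (A - B *m K) ^+ j.+1 = (A - B *m K) ^+ j *m (A - B *m K) by rewrite exprSr.
have e2 : A ^+ j.+1 = A ^+ j *m A by rewrite exprSr.
rewrite e1 e2 mulmxA IH; last exact: ltnW.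
have z : row ord_max (invmx (ctrb A B)) *m A ^+ j *m B = 0.
  rewrite -mulmxA (mx11_scalar (_ *m (A ^+ j *m B))) s_lemma //; last exact: ltnW.
  by rewrite (ltn_eqF hj) /= raddf0.
by rewrite mulmxDr mulmxN mulmxA z mul0mx oppr0 addr0 mulmxA.
Qed.

Lemma F2 (R : realFieldType) m (A : 'M[R]_m.+1) (B : 'cV[R]_m.+1) (K : 'rV[R]_m.+1) :
  ctrb A B \in unitmx ->
  row ord_max (invmx (ctrb A B)) *m (A - B *m K) ^+ m.+1 =
  row ord_max (invmx (ctrb A B)) *m A ^+ m.+1 - K.
Proof.
move=> hu.
have e1 : (A - B *m K) ^+ m.+1 = (A - B *m K) ^+ m *m (A - B *m K) by rewrite exprSr.
have e2 : A ^+ m.+1 = A ^+ m *m A by rewrite exprSr.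
rewrite e1 e2 mulmxA F1 //.
have z : row ord_max (invmx (ctrb A B)) *m A ^+ m *m B = 1%:M.
  rewrite -mulmxA (mx11_scalar (_ *m (A ^+ m *m B))) s_lemma //.
  by rewrite eqxx.
by rewrite mulmxDr mulmxN mulmxA z mul1mx mulmxA.
Qed.

Lemma G (R : realFieldType) m (A : 'M[R]_m.+1) (B : 'cV[R]_m.+1) (K : 'rV[R]_m.+1)
  (q : {poly R}) :
  ctrb A B \in unitmx -> (size q <= m.+2)%N ->
  row ord_max (invmx (ctrb A B)) *m horner_mx (A - B *m K) q =
  row ord_max (invmx (ctrb A B)) *m horner_mx A q - q`_m.+1 *: K.
Proof.
move=> hu hq; rewrite (hsum _ _ (A - B *m K) _ _ hq) (hsum _ _ A _ _ hq) !mulmx_sumr [in LHS]big_ord_recr [in RHS]big_ord_recr /=.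
rewrite -!scalemxAr F2 // scalerBr addrA; congr (_ + _ - _).
apply: eq_bigr => i _; rewrite -!scalemxAr F1 //.
by rewrite -ltnS.
Qed.

Lemma L (R : realFieldType) m (A : 'M[R]_m.+1) (B : 'cV[R]_m.+1) (r : {poly R}) :
  ctrb A B \in unitmx -> (size r <= m.+1)%N ->
  row ord_max (invmx (ctrb A B)) *m horner_mx A r = 0 -> r = 0.
Proof.
move=> hu hr h; apply/eqP; apply: contraT => nz.
have sp : (0 < size r)%N by rewrite size_poly_gt0.
set d := (size r).-1.
have dlt : (d < m.+1)%N by rewrite /d prednK.
have := congr1 (fun M : 'M[R]_(1,m.+1) => (M *m (A ^+ (m - d) *m B)) 0 0) h.
rewrite /= mul0mx [RHS]mxE (hsum _ _ A _ _ hr) mulmx_sumr mulmx_suml summxE.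
rewrite (bigD1 (Ordinal dlt)) //= big1.
  have dm : (d <= m)%N by rewrite -ltnS.
  rewrite addr0 -scalemxAr term_eq (subnKC dm).
  rewrite s_lemma // eqxx mulr1 => h0.
  have : lead_coef r != 0 by rewrite lead_coef_eq0.
  by rewrite /lead_coef -/d h0 eqxx.
move=> i hi; rewrite -scalemxAr term_eq.
case: (ltngtP i d) => hid.
- have hlt : (i + (m - d) < m)%N by lia.
  rewrite s_lemma //; last by lia.
  by rewrite (ltn_eqF hlt) mulr0.
- have hs : size r = d.+1 by rewrite /d prednK.
  have hsi : (size r <= i)%N by rewrite hs.
  by rewrite (leq_sizeP _ _ hsi i (leqnn _)) mul0r.
- by move: hi; rewrite -val_eqE /= hid eqxx.
Qed.

Lemma Phi_coef (R : realFieldType) n (p : nat -> R) j :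
  (n <= j)%N -> (Phi n p)`_j = (j == n)%:R.
Proof.
move=> hj; rewrite /Phi coefD coefXn coef_sum big_nat big1 ?addr0 //.
move=> i /andP [h1 h2]; rewrite coefCM coefXn.
have -> : (j == n - i)%N = false by apply/eqP; lia.
by rewrite mulr0.
Qed.

Lemma chi_coef (R : realFieldType) m (F : 'M[R]_m.+1) j :
  (m.+1 <= j)%N -> (char_poly F)`_j = (j == m.+1)%:R.
Proof.
move=> hj; case: (ltngtP j m.+1) => h.
- by exfalso; lia.
- by rewrite nth_default ?size_char_poly // (gtn_eqF h).
- rewrite h.
  have := monicP (char_poly_monic F).
  by rewrite /lead_coef size_char_poly.
Qed.

Theorem mainTheorem4 (R : realFieldType) (m : nat)
  (A : 'M[R]_m.+1) (B : 'cV[R]_m.+1)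
  (C : forall k : nat, 'M[R]_(m.+1 - k, m.+1 - k.-1)) (p : nat -> R) :
  ctrb A B \in unitmx ->
  row ord_max (invmx (ctrb A B)) = castmx (subSnn m, erefl m.+1) (prodC C m) ->
  Kfinal A C p = row ord_max (invmx (ctrb A B)) *m horner_mx A (Phi m.+1 p) /\
  char_poly (A - B *m Kfinal A C p) = Phi m.+1 p.
Proof.
move=> hu hw.
have P1 : Kfinal A C p = row ord_max (invmx (ctrb A B)) *m horner_mx A (Phi m.+1 p).
  rewrite /Kfinal Kmat_eq /Amat /= -mulmxDr -castmx_mull -hw hPhi.
  by [].
split => //.
set K := Kfinal A C p; set w := row ord_max (invmx (ctrb A B)).
set chi := char_poly (A - B *m K).
have hG := G _ _ A B K chi hu.
rewrite size_char_poly in hG; specialize (hG (leqnn _)).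
rewrite Cayley_Hamilton mulmx0 (chi_coef _ _ _ _ (leqnn _)) eqxx scale1r in hG.
have hK : w *m horner_mx A chi = K.
  by apply/eqP; rewrite -subr_eq0 -hG; [].
apply/eqP; rewrite -subr_eq0; apply/eqP.
apply: (L _ _ A B) => //.
  apply/leq_sizeP => j hj; rewrite coefB (chi_coef _ _ _ _ hj) Phi_coef //.
  by rewrite subrr.
rewrite rmorphB /= mulmxDr mulmxN hK -P1 -/K.
by rewrite subrr.
Qed.
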